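(* Consider the multicast coalitional game with player set $\mathcal{N}=\{1,\ldots,N\}$, $N\ge2$, and value function $$v(S)=\sum_{i\in S}U_i-\sum_{i\in S}\frac{\alpha_i}{R_S}-\frac{\beta+\gamma}{R_S},\qquad R_S=\min_{i\in S}R_i,$$ for nonempty $S\subseteq\mathcal{N}$. Suppose $P_{Rx,i}=P_{Rx}$ for all $i$, so that $\alpha_i=\alpha:=aP_{Rx}X$ for all $i$. Let $R_k=\min_iR_i$ and $R_m=\max_iR_i$, and write $R_m=\mu R_k$ with $\mu\ge1$. If $$\mu>1+\frac{\beta+\gamma}{\alpha},$$ then the core is empty.
   Context: A transmitter multicasts a file of size $X>0$ bits to users $\mathcal{N}=\{1,\dots,N\}$. User $i$ has valuation $U_i\in\mathbb{R}$, downloads at rate $R_i>0$, and consumes receive power $P_{Rx,i}>0$; the transmitter transmits at power $P_{Tx}>0$. Costs per unit energy are $a>0$ at users and $b>0$ at the transmitter; bandwidth cost per second is $w>0$. Set $\alpha_i=aP_{Rx,i}X$, $\beta=bP_{Tx}X$, $\gamma=wX$. The core is the set of payoff vectors $(x_1,\dots,x_N)\in\mathbb{R}^N$ with $\sum_{i\in\mathcal{N}}x_i=v(\mathcal{N})$ and $\sum_{i\in S}x_i\ge v(S)$ for every nonempty $S\subseteq\mathcal{N}$. *)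

(* Defs.v *)
From mathcomp Require Import all_boot all_order all_algebra.
Set Implicit Arguments. Unset Strict Implicit. Unset Printing Implicit Defensive.
Import Order.TTheory GRing.Theory Num.Theory.
Local Open Scope ring_scope.

(* Minimum / maximum of rates over a set of users; only meaningful for
   nonempty S (returns 0 on the empty set, which is never used). *)
Definition rate_min (R : realFieldType) (N : nat) (Rr : 'I_N -> R) (S : {set 'I_N}) : R :=
  if [pick i in S] is Some i0 then \big[Num.min/Rr i0]_(i in S) Rr i else 0.

Definition rate_max (R : realFieldType) (N : nat) (Rr : 'I_N -> R) (S : {set 'I_N}) : R :=
  if [pick i in S] is Some i0 then \big[Num.max/Rr i0]_(i in S) Rr i else 0.

Definition mc_value (R : realFieldType) (N : nat) (U Rr alpha : 'I_N -> R)
  (beta gamma : R) (S : {set 'I_N}) : R :=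
  \sum_(i in S) U i - \sum_(i in S) alpha i / rate_min Rr S
  - (beta + gamma) / rate_min Rr S.

Definition in_core (R : realFieldType) (N : nat) (v : {set 'I_N} -> R) (x : 'I_N -> R) : Prop :=
  \sum_(i < N) x i = v setT /\
  (forall S : {set 'I_N}, S != set0 -> v S <= \sum_(i in S) x i).

(* Main.v *)
Require Import Defs.
From mathcomp Require Import all_boot all_order all_algebra.
From mathcomp Require Import ring lra.
Import Order.TTheory GRing.Theory Num.Theory.
Local Open Scope ring_scope.
Require Import Defs.
From mathcomp Require Import all_boot all_order all_algebra.
Import Order.TTheory GRing.Theory Num.Theory.
Local Open Scope ring_scope.

Lemma rmin_spec (R : realFieldType) (N : nat) (Rr : 'I_N -> R) (S : {set 'I_N}) :
  S != set0 -> (exists2 i, i \in S & rate_min Rr S = Rr i) /\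
  (forall j, j \in S -> rate_min Rr S <= Rr j).
Proof.
move=> S0; rewrite /rate_min; case: pickP => [i0 Hi0|H0]; last first.
  by case/set0Pn: S0 => y; rewrite H0.
split.
  apply: (big_ind (fun y => exists2 i, i \in S & y = Rr i)).
  - by exists i0.
  - move=> y z [i Hi ->] [k Hk ->]; rewrite /Num.min; case: ifP => _.
      by exists i. by exists k.
  - by move=> i Hi; exists i.
move=> j Hj; rewrite (bigD1 j) //= ge_min lexx //.
Qed.

Lemma rmax_spec (R : realFieldType) (N : nat) (Rr : 'I_N -> R) (S : {set 'I_N}) :
  S != set0 -> (exists2 i, i \in S & rate_max Rr S = Rr i) /\
  (forall j, j \in S -> Rr j <= rate_max Rr S).
Proof.
move=> S0; rewrite /rate_max; case: pickP => [i0 Hi0|H0]; last first.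
  by case/set0Pn: S0 => y; rewrite H0.
split.
  apply: (big_ind (fun y => exists2 i, i \in S & y = Rr i)).
  - by exists i0.
  - move=> y z [i Hi ->] [k Hk ->]; rewrite /Num.max; case: ifP => _.
      by exists k. by exists i.
  - by move=> i Hi; exists i.
move=> j Hj; rewrite (bigD1 j) //= le_max lexx //.
Qed.

Theorem theorem6 (R : realFieldType) (N : nat) (hN : (2 <= N)%N)
  (U Rr PRx : 'I_N -> R) (PTx a b w X P : R)
  (hX : 0 < X) (hR : forall i, 0 < Rr i) (hPRx : forall i, 0 < PRx i)
  (hPTx : 0 < PTx) (ha : 0 < a) (hb : 0 < b) (hw : 0 < w)
  (hconst : forall i, PRx i = P) :
  let alpha_i := fun i => a * PRx i * X in
  let alpha := a * P * X in
  let beta := b * PTx * X in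
  let gamma := w * X in
  let Rk := rate_min Rr setT in
  let Rm := rate_max Rr setT in
  let mu := Rm / Rk in
  mu > 1 + (beta + gamma) / alpha ->
  forall x : 'I_N -> R, ~ in_core (mc_value U Rr alpha_i beta gamma) x.
Proof.
move=> alpha_i alpha beta gamma Rk Rm mu hmu x [hsum hcore].
have i0 : 'I_N by exists 0%N; apply: leq_trans hN.
have T0 : [set: 'I_N] != set0 by apply/set0Pn; exists i0.
have [[k _ hk] hkmin] := @rmin_spec _ _ Rr _ T0.
have [[m _ hm] hmmax] := @rmax_spec _ _ Rr _ T0.
have hP : 0 < P by rewrite -(hconst i0).
have hal : 0 < alpha by rewrite /alpha !mulr_gt0.
have hc : 0 < beta + gamma by rewrite /beta /gamma addr_gt0 // !mulr_gt0.
set c := beta + gamma in hc hmu *.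
have hRk : 0 < Rk by rewrite /Rk hk.
have hRm : 0 < Rm by rewrite /Rm hm.
have hkm : k != m.
  apply/eqP => ekm; move: hmu; rewrite /mu /Rm /Rk hm hk ekm divff ?gt_eqF //.
  have : 0 < c / alpha by rewrite divr_gt0.
  lra.
set S := [set: 'I_N] :\ m.
have kS : k \in S by rewrite !inE hkm.
have S0 : S != set0 by apply/set0Pn; exists k.
have hSmin : rate_min Rr S = Rk.
  have [[j jS hj] hjmin] := @rmin_spec _ _ Rr _ S0.
  apply/eqP; rewrite eq_le; apply/andP; split.
    by rewrite /Rk hk; apply: hjmin.
  by rewrite hj; apply: hkmin; rewrite inE.
have m0 : [set m] != set0 by apply/set0Pn; exists m; rewrite inE.
have hmmin : rate_min Rr [set m] = Rm.
  have [[j jS hj] _] := @rmin_spec _ _ Rr _ m0.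
  by move: jS; rewrite inE => /eqP ejm; rewrite hj ejm /Rm hm.
have h1 := hcore _ m0.
have h2 := hcore _ S0.
move: hsum h1 h2; rewrite /mc_value hSmin hmmin -/Rk !big_set1.
have eT : \sum_(i < N) x i = \sum_(i in [set: 'I_N]) x i by apply: eq_bigl => i; rewrite inE.
rewrite eT.
rewrite (big_setD1 m (in_setT m)) /=.
rewrite (big_setD1 m (in_setT m)) /=.
rewrite (big_setD1 m (in_setT m)) /= -/S.
have ea : forall i, alpha_i i = alpha by move=> i; rewrite /alpha_i hconst.
rewrite !ea.
set A := \sum_(i in S) U i.
set XS := \sum_(i in S) x i.
set Sg := \sum_(i in S) alpha_i i / Rk.
move=> e1 h1 h2.
rewrite -/c in e1 h1 h2.
have hd : alpha / Rk <= (alpha + c) / Rm.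
  rewrite mulrDl; lra.
have hd2 : alpha / Rk * Rm <= (alpha + c) / Rm * Rm by rewrite ler_wpM2r // ltW.
rewrite divfK ?gt_eqF // in hd2.
have hm2 : alpha * (1 + c / alpha) < alpha * mu by rewrite ltr_pM2l.
have e3 : alpha * (1 + c / alpha) = alpha + c by field; rewrite gt_eqF.
have e4 : alpha * mu = alpha / Rk * Rm by rewrite /mu; field; rewrite gt_eqF.
lra.
Qed.
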